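(* A game $G=(T,A)$ is weakly finitely small in $\mathbf{Games}_A$ if and only if $G$ is finite and trivial for Alice, i.e. $\mathrm{Run}(T)$ is finite and $A=\mathrm{Run}(T)$.
   Context: A game tree is $T\subseteq M^{<\omega}$ (some set $M$) closed under initial segments such that every $t\in T$ has an extension $t^\frown x\in T$; $|t|$ is the length, $t\restriction k$ the initial segment of length $k$. $\mathrm{Run}(T)=\{R\in M^\omega:R\restriction n\in T\ \forall n\}$. A game is $(T,A)$ with $A\subseteq\mathrm{Run}(T)$. A chronological map $f\colon T_1\to T_2$ satisfies $|f(t)|=|t|$ and $f(t\restriction k)=f(t)\restriction k$, inducing $\bar f$ on runs via $\bar f(R)\restriction n=f(R\restriction n)$. $\mathbf{Games}_A$ is the category of games whose morphisms $(T_1,A_1)\to(T_2,A_2)$ are chronological maps $f$ with $\bar f[A_1]\subseteq A_2$ (A-morphisms). $\omega$ is a category via its order. A game $G$ is weakly finitely small in $\mathbf{Games}_A$ if for every functor $S\colon\omega\to\mathbf{Games}_A$ with colimit cocone $(q_n\colon S(n)\to L)_{n<\omega}$ in $\mathbf{Games}_A$ and every A-morphism $f\colon G\to L$ there are $n<\omega$ and an A-morphism $\tilde f\colon G\to S(n)$ with $q_n\circ\tilde f=f$. *)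

(* Defs.v *)
From Stdlib Require List.
From mathcomp Require Import all_boot.
Set Implicit Arguments. Unset Strict Implicit. Unset Printing Implicit Defensive.


Definition restr (M : Type) (R : nat -> M) (n : nat) : seq M := mkseq R n.

Definition isRun (M : Type) (T : seq M -> Prop) (R : nat -> M) : Prop :=
  forall n, T (restr R n).

Record game := Game {
  gM : Type;
  gT : seq gM -> Prop;
  gT_pref : forall t k, gT t -> gT (take k t);
  gT_ext : forall t, gT t -> exists x, gT (rcons t x);
  gA : (nat -> gM) -> Prop;
  gA_run : forall R, gA R -> isRun gT R
}.
Arguments gT : clear implicits.
Arguments gA : clear implicits.

(* The map is given as a function on all of seq (gM G1); only its values on T1
   matter (morphisms are identified when they agree on T1, see [hom_eq]). *)
Record hom (G1 G2 : game) := Hom {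
  hfun : seq (gM G1) -> seq (gM G2);
  hom_T : forall t, gT G1 t -> gT G2 (hfun t);
  hom_size : forall t, gT G1 t -> size (hfun t) = size t;
  hom_pref : forall t k, gT G1 t -> hfun (take k t) = take k (hfun t);
  hom_A : forall R, gA G1 R ->
     exists R', gA G2 R' /\ forall n, hfun (restr R n) = restr R' n
}.

Definition hom_eq (G1 G2 : game) (f g : hom G1 G2) : Prop :=
  forall t, gT G1 t -> hfun f t = hfun g t.

Definition comp_eq (G1 G2 G3 : game) (f : hom G1 G2) (g : hom G2 G3) (h : hom G1 G3) : Prop :=
  forall t, gT G1 t -> hfun g (hfun f t) = hfun h t.

Record chain := Chain {
  cobj : nat -> game;
  cmap : forall n m, n <= m -> hom (cobj n) (cobj m);
  cmap_id : forall n (h : n <= n) t, gT (cobj n) t -> hfun (@cmap n n h) t = t;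
  cmap_comp : forall n m p (hnm : n <= m) (hmp : m <= p) (hnp : n <= p),
      comp_eq (@cmap n m hnm) (@cmap m p hmp) (@cmap n p hnp)
}.

Definition cocone (S : chain) (X : game) (q : forall n, hom (cobj S n) X) : Prop :=
  forall n m (hnm : n <= m), comp_eq (@cmap S n m hnm) (q m) (q n).

Definition is_colimit (S : chain) (L : game) (q : forall n, hom (cobj S n) L) : Prop :=
  cocone q /\
  forall (X : game) (c : forall n, hom (cobj S n) X), cocone c ->
    (exists u : hom L X, forall n, comp_eq (q n) u (c n)) /\
    (forall u1 u2 : hom L X, (forall n, comp_eq (q n) u1 (c n)) ->
        (forall n, comp_eq (q n) u2 (c n)) -> hom_eq u1 u2).

Definition weakly_finitely_small (G : game) : Prop :=
  forall (S : chain) (L : game) (q : forall n, hom (cobj S n) L),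
    is_colimit q ->
    forall f : hom G L, exists n (ft : hom G (cobj S n)), comp_eq ft (q n) f.

Definition finite_runs (G : game) : Prop :=
  exists s : seq (nat -> gM G), forall R, isRun (gT G) R -> List.In R s.

Definition trivial_for_Alice (G : game) : Prop :=
  forall R, isRun (gT G) R -> gA G R.

(* Main.v *)
Require Import Defs.
From mathcomp Require Import all_boot.
From Stdlib Require Import Classical ClassicalEpsilon FunctionalExtensionality PropExtensionality.
From mathcomp Require Import all_boot.
Set Implicit Arguments. Unset Strict Implicit. Unset Printing Implicit Defensive.

Lemma take_mkseq (T : Type) (f : nat -> T) k n : take k (mkseq f n) = mkseq f (minn k n).
Proof. by rewrite /mkseq -map_take take_iota. Qed.

Lemma eq_in_mkseq (T : Type) (f g : nat -> T) n :
  (forall i, i < n -> f i = g i) -> mkseq f n = mkseq g n.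
Proof.
move=> H; rewrite /mkseq; apply/eq_in_map => i; rewrite mem_iota add0n => /andP[_ /H]; done.
Qed.

Lemma take_restr (M : Type) (R : nat -> M) k n : take k (restr R n) = restr R (minn k n).
Proof. exact: take_mkseq. Qed.

Lemma take_restrl (M : Type) (R : nat -> M) k n : k <= n -> take k (restr R n) = restr R k.
Proof. by move=> h; rewrite take_restr (minn_idPl h). Qed.

Lemma size_restr (M : Type) (R : nat -> M) n : size (restr R n) = n.
Proof. exact: size_mkseq. Qed.

Lemma restr_inj (M : Type) (R R' : nat -> M) : (forall k, restr R k = restr R' k) -> R = R'.
Proof.
move=> H; apply: functional_extensionality => i.
have := f_equal (nth (R i) ^~ i) (H i.+1).
by rewrite /restr !nth_mkseq.
Qed.

Lemma restr_eq_lt (M : Type) (R R' : nat -> M) n i : restr R n = restr R' n -> i < n -> R i = R' i.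
Proof.
move=> H hi; have := f_equal (nth (R i) ^~ i) H.
by rewrite /restr !nth_mkseq.
Qed.

Definition emib (P : Prop) : bool := if excluded_middle_informative P then true else false.
Lemma emibP (P : Prop) : emib P <-> P.
Proof. rewrite /emib; case: excluded_middle_informative => //. Qed.

Section Incl.
Variables (M : Type) (T : nat -> seq M -> Prop) (A : nat -> (nat -> M) -> Prop).
Hypothesis Tpref : forall n t k, T n t -> T n (take k t).
Hypothesis Text : forall n t, T n t -> exists x, T n (rcons t x).
Hypothesis Arun : forall n R, A n R -> isRun (T n) R.
Hypothesis Tmono : forall n m t, n <= m -> T n t -> T m t.
Hypothesis Amono : forall n m R, n <= m -> A n R -> A m R.
Hypothesis Tsmall : forall n t, T n t -> T (size t) t.

Definition Sg n : game := @Game M (T n) (@Tpref n) (@Text n) (A n) (@Arun n).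

Definition TL (t : seq M) : Prop := T (size t) t.
Definition AL (R : nat -> M) : Prop := exists n, A n R.

Lemma TL_pref t k : TL t -> TL (take k t).
Proof. move=> h; exact: Tsmall (Tpref k h). Qed.
Lemma TL_ext t : TL t -> exists x, TL (rcons t x).
Proof.
move=> /Text[x hx]; exists x; rewrite /TL size_rcons; apply: Tmono hx; exact: leqnSn.
Qed.
Lemma AL_run R : AL R -> isRun TL R.
Proof.
move=> [n /Arun h] k; have := Tsmall (h k); by rewrite /TL.
Qed.

Definition Lg : game := @Game M TL TL_pref TL_ext AL AL_run.

Definition incl_map n m (h : n <= m) : hom (Sg n) (Sg m).
refine (@Hom (Sg n) (Sg m) id _ _ _ _).
- by move=> t /= ht; exact: Tmono h ht.
- done.
- done.
- move=> R /= hR; exists R; split => //; exact: Amono hR.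
Defined.

Definition Sch : chain.
refine (@Chain Sg incl_map _ _) => //.
Defined.

Definition qL n : hom (Sg n) Lg.
refine (@Hom (Sg n) Lg id _ _ _ _).
- move=> t /= ht; exact: Tsmall ht.
- done.
- done.
- move=> R /= hR; exists R; split => //; by exists n.
Defined.

Lemma qL_colim : @is_colimit Sch Lg qL.
Proof.
split; first by [].
move=> X c hc.
have compat : forall a b t, T a t -> T b t -> hfun (c a) t = hfun (c b) t.
  move=> a b t ha hb; case: (leqP a b) => hab.
  - by have := hc a b hab t ha.
  - by have := hc b a (ltnW hab) t hb => ->.
split.
- have upref : forall t k, TL t -> hfun (c (size (take k t))) (take k t) = take k (hfun (c (size t)) t).
    move=> t k ht; rewrite -(@hom_pref _ _ (c (size t))) //.
    apply: compat; [exact: Tsmall (Tpref k ht) | exact: Tpref k ht].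
  unshelve eexists.
  + refine (@Hom Lg X (fun t => hfun (c (size t)) t) _ _ _ _).
    * move=> t /= ht; exact: (@hom_T _ _ (c (size t))).
    * move=> t /= ht; exact: (@hom_size _ _ (c (size t))).
    * move=> t k /= ht; exact: upref.
    * move=> R /= [n hR].
      have [R' [hR' eR']] := @hom_A _ _ (c n) R hR.
      exists R'; split => // k; rewrite -eR'; apply: compat.
      -- by rewrite /= size_restr; have := Tsmall (Arun hR k); rewrite size_restr.
      -- exact: Arun hR k.
  + move=> n t /= ht; apply: compat => //; exact: Tsmall ht.
- move=> u1 u2 h1 h2 t ht.
  by rewrite -[t]/(hfun (qL (size t)) t) (h1 _ t ht) (h2 _ t ht).
Qed.

Lemma incl_wfs (G : game) : weakly_finitely_small G -> forall f : hom G Lg,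
  exists n, (forall t, gT G t -> T n (hfun f t)) /\
    (forall R, gA G R -> exists R', A n R' /\ forall k, hfun f (restr R k) = restr R' k).
Proof.
move=> W f; have [n [ft hft]] := W Sch Lg qL qL_colim f.
exists n; split.
- move=> t ht; rewrite -(hft t ht); exact: (@hom_T _ _ ft).
- move=> R hR; have [R' [hR' e]] := @hom_A _ _ ft R hR.
  exists R'; split => // k; rewrite -(hft _ (gA_run hR k)); exact: e.
Qed.
End Incl.

Definition cid := constructive_indefinite_description.

Definition homcomp (G1 G2 G3 : game) (f : hom G1 G2) (g : hom G2 G3) : hom G1 G3.
refine (@Hom G1 G3 (fun t => hfun g (hfun f t)) _ _ _ _).
- move=> t ht; exact: (hom_T g (hom_T f ht)).
- move=> t ht; rewrite (hom_size g (hom_T f ht)); exact: (hom_size f ht).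
- move=> t k ht; rewrite (hom_pref f k ht); exact: (hom_pref g k (hom_T f ht)).
- move=> R hR; have [R1 [h1 e1]] := hom_A f hR; have [R2 [h2 e2]] := hom_A g h1.
  exists R2; split => // k; by rewrite e1 e2.
Defined.

Definition homid (G1 : game) : hom G1 G1.
refine (@Hom G1 G1 id _ _ _ _) => //.
move=> R hR; by exists R.
Defined.

Section NodeRun.
Variable G : game.
Variable t : seq (gM G).
Hypothesis ht : gT G t.

Definition x0 : gM G := proj1_sig (cid (gT_ext ht)).
Definition extx (s : seq (gM G)) : gM G :=
  match excluded_middle_informative (exists x, gT G (rcons s x)) with
  | left h => proj1_sig (cid h) | right _ => x0 end.
Lemma extx_spec s : gT G s -> gT G (rcons s (extx s)).
Proof.
move=> hs; rewrite /extx; case: excluded_middle_informative => [h|hn].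
- exact: proj2_sig (cid h).
- by exfalso; apply: hn; apply: gT_ext.
Qed.
Fixpoint sq k := if k is k'.+1 then rcons (sq k') (extx (sq k')) else t.
Lemma sq_T k : gT G (sq k).
Proof. elim: k => //= k IH; exact: extx_spec. Qed.
Lemma sq_size k : size (sq k) = size t + k.
Proof. elim: k => [|k IH] /=; first by rewrite addn0. by rewrite size_rcons IH addnS. Qed.
Lemma sq_pref k k' : k <= k' -> take (size t + k) (sq k') = sq k.
Proof.
elim: k' => [|k' IH]; first by rewrite leqn0 => /eqP -> /=; rewrite addn0 take_size.
rewrite leq_eqVlt => /orP[/eqP ->|h]; first by rewrite -sq_size take_size.
rewrite /= -cats1 takel_cat ?sq_size ?leq_add2l //; exact: IH.
Qed.
Definition Rrun i := nth x0 (sq i.+1) i.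
Lemma restr_Rrun n : restr Rrun n = take n (sq n).
Proof.
have hn : n <= size (sq n) by rewrite sq_size leq_addl.
rewrite -[take n (sq n)](mkseq_nth x0) size_takel //; apply: eq_in_mkseq => i hi.
rewrite nth_take // /Rrun -(@sq_pref i.+1 n) // nth_take //.
by rewrite addnS ltnS leq_addl.
Qed.
Lemma node_on_run : exists R, isRun (gT G) R /\ restr R (size t) = t.
Proof.
exists Rrun; split.
- move=> n; rewrite restr_Rrun; apply: gT_pref; exact: sq_T.
- by rewrite restr_Rrun -[X in take X _]addn0 sq_pref.
Qed.
End NodeRun.

Lemma eventually (A : Type) (l : list A) (Q : A -> nat -> Prop) :
  (forall a m m', m <= m' -> Q a m -> Q a m') ->
  (forall a, List.In a l -> exists m, Q a m) -> exists m, forall a, List.In a l -> Q a m.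
Proof.
move=> Hm; elim: l => [|a l IH] H; first by exists 0.
have [m1 h1] := H a (or_introl erefl).
have [m2 h2] := IH (fun b hb => H b (or_intror hb)).
exists (maxn m1 m2) => b [<-|hb].
- apply: Hm h1; exact: leq_maxl.
- apply: Hm (h2 b hb); exact: leq_maxr.
Qed.

Lemma minimal (P : nat -> Prop) : (exists k, P k) -> exists k, P k /\ forall j, j < k -> ~ P j.
Proof.
move=> [k hk]; apply: NNPP => hn.
suff : forall n j, j < n -> ~ P j by move/(_ k.+1 k (ltnSn _)).
elim=> // n IH j; rewrite ltnS leq_eqVlt => /orP[/eqP ->|h]; last exact: IH.
move=> hPn; apply: hn; by exists n.
Qed.

Definition Tb (n : nat) (s : seq bool) : Prop :=
  forall i j, j < size s -> i <= j -> (nth true s i || (n <= i)) -> nth true s j.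
Definition Ab (n : nat) (R : nat -> bool) : Prop := isRun (Tb n) R.

Lemma Tb_pref n t k : Tb n t -> Tb n (take k t).
Proof.
move=> H i j; rewrite size_take_min leq_min => /andP[hk hs] hij.
rewrite !nth_take //; last exact: leq_ltn_trans hij hk.
exact: H.
Qed.
Lemma Tb_ext n t : Tb n t -> exists x, Tb n (rcons t x).
Proof.
move=> H; exists true => i j; rewrite size_rcons ltnS leq_eqVlt => /orP[/eqP ->|hj] hij.
- by rewrite [nth _ _ (size t)]nth_rcons ltnn eqxx.
- rewrite !nth_rcons hj (leq_ltn_trans hij hj); exact: H.
Qed.
Lemma Ab_run n R : Ab n R -> isRun (Tb n) R. Proof. done. Qed.
Lemma Tb_mono n m t : n <= m -> Tb n t -> Tb m t.
Proof.
move=> hnm H i j hj hij /orP[h|h]; apply: (H i j) => //; first by rewrite h.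
by rewrite (leq_trans hnm h) orbT.
Qed.
Lemma Ab_mono n m R : n <= m -> Ab n R -> Ab m R.
Proof. move=> h H k; exact: Tb_mono h (H k). Qed.
Lemma Tb_small n t : Tb n t -> Tb (size t) t.
Proof.
move=> H i j hj hij /orP[h|h]; first by apply: (H i j) => //; rewrite h.
by have := leq_ltn_trans h (leq_ltn_trans hij hj); rewrite ltnn.
Qed.

Section TrivCase.
Variable G : game.
Variable R0 : nat -> gM G.
Hypothesis R0run : isRun (gT G) R0.
Hypothesis R0nA : ~ gA G R0.

Definition bad (t : seq (gM G)) i : bool := ~~ emib (take i.+1 t = restr R0 i.+1).
Definition fb (t : seq (gM G)) : seq bool := mkseq (bad t) (size t).

Lemma bad_mono t i j : i <= j -> j < size t -> bad t i -> bad t j.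
Proof.
move=> hij hj; rewrite /bad; apply: contra => /emibP e; apply/emibP.
by rewrite -(take_takel t (hij : i.+1 <= j.+1)) e take_restrl.
Qed.

Lemma fb_T t : TL Tb (fb t).
Proof.
rewrite /TL /fb => i j; rewrite !size_mkseq => hj hij.
have hi : i < size t := leq_ltn_trans hij hj.
rewrite !nth_mkseq //.
case/orP => [h|h]; first exact: bad_mono h.
by have := leq_ltn_trans h (leq_ltn_trans hij hj); rewrite ltnn.
Qed.

Definition fbhom : hom G (Lg Tb_pref Tb_ext Ab_run Tb_mono Tb_small).
refine (@Hom G (Lg Tb_pref Tb_ext Ab_run Tb_mono Tb_small) fb _ _ _ _).
- move=> t _; exact: fb_T.
- move=> t _; exact: size_mkseq.
- move=> t k _; rewrite /fb take_mkseq size_take_min; apply: eq_in_mkseq => i.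
  rewrite leq_min => /andP[hk _]; by rewrite /bad take_takel.
- move=> R hR /=.
  have neq : R <> R0 by move=> e; apply: R0nA; rewrite -e.
  have [k0 hk0] : exists k0, R k0 <> R0 k0.
    apply: NNPP => hn; apply: neq; apply: functional_extensionality => k.
    by apply: NNPP => hk; apply: hn; exists k.
  pose R' i := ~~ emib (restr R i.+1 = restr R0 i.+1).
  exists R'; split.
  + exists k0.+1 => n i j; rewrite size_restr => hj hij.
    have hi : i < n := leq_ltn_trans hij hj.
    rewrite /restr !nth_mkseq //.
    have key : forall a b, a <= b -> R' a -> R' b.
      move=> a b hab; rewrite /R'; apply: contra => /emibP e; apply/emibP.
      by rewrite -(take_restrl R (hab : a.+1 <= b.+1)) e take_restrl.
    case/orP => [h|h]; first exact: key h.
    apply: (key k0); first exact: leq_trans (leqnSn _) (leq_trans h hij).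
    rewrite /R'; apply/negP => /emibP e; apply: hk0; exact: restr_eq_lt e (ltnSn _).
  + move=> k; rewrite /fb size_restr; apply: eq_in_mkseq => i hi.
    by rewrite /bad /R' take_restrl.
Defined.

Lemma triv_case : weakly_finitely_small G -> False.
Proof.
move=> W; have [n [hT _]] := incl_wfs Ab_mono W fbhom.
have := hT _ (R0run n.+1) n n.
change (hfun fbhom (restr R0 n.+1)) with (fb (restr R0 n.+1)).
rewrite /fb !size_mkseq => /(_ (ltnSn _) (leqnn _)).
rewrite nth_mkseq // leqnn orbT => /(_ isT).
by rewrite /bad take_restrl // => /negP; apply; apply/emibP.
Qed.
End TrivCase.

Lemma wfs_triv (G : game) : weakly_finitely_small G -> trivial_for_Alice G.
Proof.
move=> W R hR; apply: NNPP => hn; exact: triv_case hR hn W.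
Qed.

Section FinCase.
Variable G : game.
Hypothesis Htriv : trivial_for_Alice G.
Hypothesis Hinf : ~ finite_runs G.

Lemma inf_next : forall s : seq (nat -> gM G), exists R, isRun (gT G) R /\ ~ List.In R s.
Proof.
move=> s; apply: NNPP => hn; apply: Hinf; exists s => R hR.
apply: NNPP => hi; apply: hn; by exists R.
Qed.

Definition nxt (s : seq (nat -> gM G)) : nat -> gM G := proj1_sig (constructive_indefinite_description _ (inf_next s)).
Lemma nxt_spec s : isRun (gT G) (nxt s) /\ ~ List.In (nxt s) s.
Proof. exact: proj2_sig (constructive_indefinite_description _ (inf_next s)). Qed.

Fixpoint Lst n : seq (nat -> gM G) := if n is n'.+1 then nxt (Lst n') :: Lst n' else [::].
Definition Rs n := nxt (Lst n).

Lemma Rs_in k n : k < n -> List.In (Rs k) (Lst n).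
Proof.
elim: n => // n IH; rewrite ltnS leq_eqVlt => /orP[/eqP ->|h] /=; first by left.
by right; apply: IH.
Qed.

Lemma Rs_neq k n : k < n -> Rs k <> Rs n.
Proof. move=> h e; have := Rs_in h; rewrite e; apply: (proj2 (nxt_spec _)). Qed.

Definition Tc (n : nat) := gT G.
Definition Ac (n : nat) (R : nat -> gM G) := isRun (gT G) R /\ forall m, n <= m -> R <> Rs m.
Lemma Tc_pref n t k : Tc n t -> Tc n (take k t). Proof. exact: gT_pref. Qed.
Lemma Tc_ext n t : Tc n t -> exists x, Tc n (rcons t x). Proof. exact: gT_ext. Qed.
Lemma Ac_run n R : Ac n R -> isRun (Tc n) R. Proof. by case. Qed.
Lemma Tc_mono n m t : n <= m -> Tc n t -> Tc m t. Proof. done. Qed.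
Lemma Ac_mono n m R : n <= m -> Ac n R -> Ac m R.
Proof. move=> h [h1 h2]; split => // k hk; apply: h2; exact: leq_trans h hk. Qed.
Lemma Tc_small n t : Tc n t -> Tc (size t) t. Proof. done. Qed.

Definition idhom : hom G (Lg Tc_pref Tc_ext Ac_run Tc_mono Tc_small).
refine (@Hom G (Lg Tc_pref Tc_ext Ac_run Tc_mono Tc_small) id _ _ _ _) => //.
move=> R hR; exists R; split => //.
have hr := gA_run hR.
case: (classic (exists m, R = Rs m)) => [[m e]|hn].
- exists m.+1; split => // k hk e'; apply: (@Rs_neq m k) => //; by rewrite -e -e'.
- exists 0; split => // k _ e; apply: hn; by exists k.
Defined.

Lemma fin_case : weakly_finitely_small G -> False.
Proof.
move=> W; have [n [_ hA]] := incl_wfs Ac_mono W idhom.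
have hr := (proj1 (nxt_spec (Lst n))).
have [R' [[_ hR'] e]] := hA _ (Htriv hr).
apply: (hR' n (leqnn n)); symmetry; apply: restr_inj => k; exact: e k.
Qed.
End FinCase.

Lemma wfs_fin (G : game) : weakly_finitely_small G -> trivial_for_Alice G -> finite_runs G.
Proof. move=> W T; apply: NNPP => hn; exact: fin_case T hn W. Qed.

Section Colim.
Variables (S : chain) (L : game) (q : forall n, hom (cobj S n) L).
Hypothesis Hq : is_colimit q.

Notation Tn n := (gT (cobj S n)).

Lemma cmap_irr n m (h h' : n <= m) : cmap S h = cmap S h'.
Proof. by rewrite (bool_irrelevance h h'). Qed.

Definition rel n (x : seq (gM (cobj S n))) m (y : seq (gM (cobj S m))) : Prop :=
  Tn n x /\ Tn m y /\ exists p (h1 : n <= p) (h2 : m <= p), hfun (cmap S h1) x = hfun (cmap S h2) y.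

Arguments rel : clear implicits.

Lemma rel_refl n x : Tn n x -> rel n x n x.
Proof. move=> h; split => //; split => //; by exists n, (leqnn n), (leqnn n). Qed.

Lemma rel_sym n x m y : rel n x m y -> rel m y n x.
Proof. move=> [hx [hy [p [h1 [h2 e]]]]]; split => //; split => //; by exists p, h2, h1. Qed.

Lemma rel_trans n x m y l z : rel n x m y -> rel m y l z -> rel n x l z.
Proof.
move=> [hx [hy [p1 [h1 [h2 e1]]]]] [_ [hz [p2 [h3 [h4 e2]]]]].
split => //; split => //.
have hP1 : p1 <= maxn p1 p2 := leq_maxl _ _.
have hP2 : p2 <= maxn p1 p2 := leq_maxr _ _.
exists (maxn p1 p2), (leq_trans h1 hP1), (leq_trans h4 hP2).
rewrite -(cmap_comp h1 hP1 (leq_trans h1 hP1) hx) e1 (cmap_comp h2 hP1 (leq_trans h2 hP1) hy).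
rewrite (cmap_irr (leq_trans h2 hP1) (leq_trans h3 hP2)).
by rewrite -(cmap_comp h3 hP2 (leq_trans h3 hP2) hy) e2 (cmap_comp h4 hP2 (leq_trans h4 hP2) hz).
Qed.

Lemma rel_push n m (h : n <= m) x : Tn n x -> rel m (hfun (cmap S h) x) n x.
Proof.
move=> hx; split; first exact: (hom_T (cmap S h) hx).
split => //; exists m, (leqnn m), h.
by rewrite (cmap_id (leqnn m) (hom_T (cmap S h) hx)).
Qed.

Definition MX := {k : nat & seq (gM (cobj S k))} -> Prop.
Definition cls n (x : seq (gM (cobj S n))) : MX := fun z => rel (projT1 z) (projT2 z) n x.

Lemma cls_eq n x m y : rel n x m y -> cls x = cls y.
Proof.
move=> r; apply: functional_extensionality => z; apply: propositional_extensionality.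
split => h; [exact: rel_trans h r | exact: rel_trans h (rel_sym r)].
Qed.

Definition cX n (x : seq (gM (cobj S n))) : seq MX := mkseq (fun i => cls (take i.+1 x)) (size x).

Lemma cX_take n (x : seq (gM (cobj S n))) k : cX (take k x) = take k (cX x).
Proof.
rewrite /cX take_mkseq size_take_min; apply: eq_in_mkseq => i.
rewrite leq_min => /andP[hk _]; by rewrite take_takel.
Qed.

Lemma cX_push n m (h : n <= m) x : Tn n x -> cX (hfun (cmap S h) x) = cX x.
Proof.
move=> hx; rewrite /cX (hom_size (cmap S h) hx); apply: eq_in_mkseq => i _.
rewrite -(hom_pref (cmap S h) i.+1 hx); apply: cls_eq; apply: rel_push.
exact: gT_pref.
Qed.

Lemma cX_rel n x m y : Tn n x -> Tn m y -> cX x = cX y -> rel n x m y.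
Proof.
move=> hx hy e.
have es : size x = size y by rewrite -(size_mkseq (fun i => cls (take i.+1 x)) (size x)) -/(cX x) e /cX size_mkseq.
case hs : (size x) => [|k].
- have ex : x = [::] by apply/size0nil.
  have ey : y = [::] by apply/size0nil; rewrite -es.
  split => //; split => //.
  exists (maxn n m), (leq_maxl n m), (leq_maxr n m).
  rewrite ex ey in hx hy *.
  have e1 := hom_size (cmap S (leq_maxl n m)) hx.
  have e2 := hom_size (cmap S (leq_maxr n m)) hy.
  by rewrite (size0nil e1) (size0nil e2).
- have := f_equal (fun s => nth (fun _ => False) s k) e.
  rewrite /cX !nth_mkseq -?es ?hs // !take_oversize -?es ?hs // => ec.
  have h := f_equal (fun P => P (existT _ n x)) ec; rewrite /cls /= in h; rewrite -h.
  exact: rel_refl.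
Qed.

Definition TX (s : seq MX) : Prop := exists n (x : seq (gM (cobj S n))), Tn n x /\ cX x = s.
Definition AX (R : nat -> MX) : Prop :=
  exists n (R' : nat -> gM (cobj S n)), gA (cobj S n) R' /\ forall k, cX (restr R' k) = restr R k.

Lemma TX_pref s k : TX s -> TX (take k s).
Proof. move=> [n [x [hx <-]]]; exists n, (take k x); split; [exact: gT_pref | exact: cX_take]. Qed.

Lemma TX_ext s : TX s -> exists z, TX (rcons s z).
Proof.
move=> [n [x [hx <-]]]; have [a ha] := gT_ext hx.
exists (cls (rcons x a)); exists n, (rcons x a); split => //.
rewrite /cX size_rcons mkseqS take_oversize ?size_rcons //; congr rcons.
apply: eq_in_mkseq => i hi; by rewrite -cats1 takel_cat.
Qed.

Lemma AX_run R : AX R -> isRun TX R.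
Proof. move=> [n [R' [hR' e]]] k; exists n, (restr R' k); split => //; exact: gA_run hR' k. Qed.

Definition Xg : game := @Game MX TX TX_pref TX_ext AX AX_run.

Lemma cX_restr n (R' : nat -> gM (cobj S n)) k : cX (restr R' k) = restr (fun i => cls (restr R' i.+1)) k.
Proof.
rewrite /cX size_restr; apply: eq_in_mkseq => i hi; by rewrite take_restrl.
Qed.

Definition chom n : hom (cobj S n) Xg.
refine (@Hom (cobj S n) Xg (@cX n) _ _ _ _).
- move=> t ht; by exists n, t.
- move=> t _; exact: size_mkseq.
- move=> t k _; exact: cX_take.
- move=> R hR; exists (fun i => cls (restr R i.+1)); split; last exact: cX_restr.
  exists n, R; split => //; exact: cX_restr.
Defined.

Lemma chom_cocone : cocone chom.
Proof. move=> n m h t ht /=; exact: cX_push. Qed.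

Definition u : hom L Xg := proj1_sig (cid (proj1 (proj2 Hq Xg chom chom_cocone))).
Lemma u_spec n t : Tn n t -> hfun u (hfun (q n) t) = cX t.
Proof. move=> ht; exact: (proj2_sig (cid (proj1 (proj2 Hq Xg chom chom_cocone))) n t ht). Qed.

Lemma q_rel n x m y : rel n x m y -> hfun (q n) x = hfun (q m) y.
Proof.
move=> [hx [hy [p [h1 [h2 e]]]]].
by rewrite -((proj1 Hq) n p h1 x hx) -((proj1 Hq) m p h2 y hy) e.
Qed.

Definition v (s : seq MX) : seq (gM L) :=
  match excluded_middle_informative (TX s) with
  | left h => let w := cid h in let w2 := cid (proj2_sig w) in hfun (q (proj1_sig w)) (proj1_sig w2)
  | right _ => [::] end.

Lemma v_spec n x : Tn n x -> v (cX x) = hfun (q n) x.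
Proof.
move=> hx; rewrite /v; case: excluded_middle_informative => [h|hn]; last first.
  by exfalso; apply: hn; exists n, x.
case: (cid h) => n' hn' /=; case: (cid hn') => x' [hx' e] /=.
apply: q_rel; apply: cX_rel => //.
Qed.

Definition vhom : hom Xg L.
refine (@Hom Xg L v _ _ _ _).
- move=> s [n [x [hx <-]]]; rewrite v_spec //; exact: (hom_T (q n) hx).
- move=> s [n [x [hx <-]]]; rewrite v_spec // (hom_size (q n) hx) /cX size_mkseq //.
- move=> s k [n [x [hx <-]]]; rewrite -cX_take !v_spec //; last exact: gT_pref.
  exact: (hom_pref (q n) k hx).
- move=> R [n [R' [hR' e]]].
  have [R'' [hR'' e']] := hom_A (q n) hR'.
  exists R''; split => // k; by rewrite -e v_spec ?e' //; exact: gA_run hR' k.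
Defined.

Lemma vu t : gT L t -> v (hfun u t) = t.
Proof.
move=> ht.
have H : hom_eq (homcomp u vhom) (homid L).
  apply: (proj2 (proj2 Hq L q (proj1 Hq))).
  - move=> n x hx /=; by rewrite u_spec // v_spec.
  - by [].
exact: H t ht.
Qed.

Lemma colim_K R1 : gA L R1 ->
  exists n (R' : nat -> gM (cobj S n)), gA (cobj S n) R' /\ forall k, hfun (q n) (restr R' k) = restr R1 k.
Proof.
move=> hR1; have [R2 [hR2 e2]] := hom_A u hR1.
have [n [R' [hR' e]]] := hR2.
exists n, R'; split => // k.
by rewrite -v_spec ?e -?e2 ?vu //; [exact: gA_run hR1 k | exact: gA_run hR' k].
Qed.

Lemma colim_C n x m y : Tn n x -> Tn m y -> hfun (q n) x = hfun (q m) y -> rel n x m y.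
Proof.
move=> hx hy e; apply: cX_rel => //; by rewrite -u_spec // e u_spec.
Qed.

End Colim.

Section Lift.
Variables (S : chain) (L : game) (q : forall n, hom (cobj S n) L).
Hypothesis Hq : is_colimit q.
Variables (G : game) (f : hom G L) (s : seq (nat -> gM G)).
Hypothesis Hs : forall R, isRun (gT G) R -> List.In R s.
Hypothesis Htriv : trivial_for_Alice G.

Notation Tn n := (gT (cobj S n)).

Definition E (R : nat -> gM G) : Prop := exists n (R' : nat -> gM (cobj S n)),
  gA (cobj S n) R' /\ forall k, hfun (q n) (restr R' k) = hfun f (restr R k).

Lemma E_run R : isRun (gT G) R -> E R.
Proof.
move=> hr; have [R1 [hR1 e1]] := hom_A f (Htriv hr).
have [n [R' [hR' e]]] := colim_K Hq hR1.
exists n, R'; split => // k; by rewrite e e1.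
Qed.

Definition lift (R : nat -> gM G) : option {n : nat & nat -> gM (cobj S n)} :=
  match excluded_middle_informative (E R) with
  | left h => let w := cid h in Some (existT _ (proj1_sig w) (proj1_sig (cid (proj2_sig w))))
  | right _ => None end.

Lemma lift_spec R : isRun (gT G) R -> exists n (R' : nat -> gM (cobj S n)),
  lift R = Some (existT _ n R') /\ gA (cobj S n) R' /\ forall k, hfun (q n) (restr R' k) = hfun f (restr R k).
Proof.
move=> hr; rewrite /lift; case: excluded_middle_informative => [h|hn]; last first.
  by exfalso; apply: hn; apply: E_run.
case: (cid h) => n hn /=; case: (cid hn) => R' [hR' e] /=.
by exists n, R'.
Qed.

Definition decb (b : bool) : {b} + {~~ b} :=
  if b as c return {c} + {~~ c} then left erefl else right erefl.
Definition tr n m (x : seq (gM (cobj S n))) : seq (gM (cobj S m)) :=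
  match decb (n <= m) with left h => hfun (cmap S h) x | right _ => [::] end.
Lemma tr_eq n m (h : n <= m) x : tr m x = hfun (cmap S h) x.
Proof. rewrite /tr; case: decb => [h'|hn]; [by rewrite (bool_irrelevance h' h) | by rewrite h in hn]. Qed.

Definition nR R := if lift R is Some p then projT1 p else 0.
Definition ln R m d : seq (gM (cobj S m)) :=
  match lift R with Some (existT n R') => tr m (restr R' d) | None => [::] end.

Definition Cons R1 R2 m := forall m', m <= m' -> forall d, restr R1 d = restr R2 d -> ln R1 m' d = ln R2 m' d.

Lemma pair_cons R1 R2 : isRun (gT G) R1 -> isRun (gT G) R2 -> exists m, Cons R1 R2 m.
Proof.
move=> hr1 hr2.
case: (classic (R1 = R2)) => [<-|hne]; first by exists 0.
have [d0 [hd0 hmin]] : exists k, R1 k <> R2 k /\ forall j, j < k -> ~ R1 j <> R2 j.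
  apply: minimal; apply: NNPP => hn; apply: hne; apply: functional_extensionality => k.
  by apply: NNPP => hk; apply: hn; exists k.
have eqd : restr R1 d0 = restr R2 d0.
  apply: eq_in_mkseq => i hi; exact: NNPP (hmin i hi).
have [n1 [R'1 [l1 [hA1 e1]]]] := lift_spec hr1.
have [n2 [R'2 [l2 [hA2 e2]]]] := lift_spec hr2.
have hx1 := gA_run hA1 d0; have hx2 := gA_run hA2 d0.
have eq : hfun (q n1) (restr R'1 d0) = hfun (q n2) (restr R'2 d0) by rewrite e1 e2 eqd.
have [_ [_ [p [h1 [h2 ep]]]]] := colim_C Hq hx1 hx2 eq.
exists p => m' hm' d ed.
have hdd : d <= d0.
  rewrite leqNgt; apply/negP => hlt; apply: hd0; exact: restr_eq_lt ed hlt.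
rewrite /ln l1 l2 (tr_eq (leq_trans h1 hm')) (tr_eq (leq_trans h2 hm')).
rewrite -(take_restrl R'1 hdd) -(take_restrl R'2 hdd).
rewrite (hom_pref _ d hx1) (hom_pref _ d hx2).
rewrite -(cmap_comp h1 hm' (leq_trans h1 hm') hx1) -(cmap_comp h2 hm' (leq_trans h2 hm') hx2).
by rewrite ep.
Qed.

Definition Q R m := isRun (gT G) R -> nR R <= m /\ forall R2, List.In R2 s -> isRun (gT G) R2 -> Cons R R2 m.

Lemma Q_mono R m m' : m <= m' -> Q R m -> Q R m'.
Proof.
move=> hm H hr; have [h1 h2] := H hr; split; first exact: leq_trans h1 hm.
move=> R2 hi hr2 k hk; apply: h2 => //; exact: leq_trans hm hk.
Qed.

Lemma Q_ex R : exists m, Q R m.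
Proof.
case: (classic (isRun (gT G) R)) => hr; last by exists 0.
have [m1 h1] := @eventually _ s (fun R2 m => isRun (gT G) R2 -> Cons R R2 m)
  (fun a m m' hm H hr2 k hk => H hr2 k (leq_trans hm hk))
  (fun a _ => match classic (isRun (gT G) a) with
     | or_introl hra => let: ex_intro m hm := pair_cons hr hra in ex_intro _ m (fun _ => hm)
     | or_intror hna => ex_intro _ 0 (fun h => False_ind _ (hna h)) end).
exists (maxn (nR R) m1) => _; split; first exact: leq_maxl.
move=> R2 hi hr2 k hk; apply: (h1 R2 hi hr2) => //; exact: leq_trans (leq_maxr _ _) hk.
Qed.

Definition P := proj1_sig (cid (@eventually _ s Q Q_mono (fun a _ => Q_ex a))).
Lemma P_spec R : List.In R s -> Q R P.
Proof. exact: (proj2_sig (cid (@eventually _ s Q Q_mono (fun a _ => Q_ex a)))). Qed.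

Definition fthere (t : seq (gM G)) : Prop := exists R, List.In R s /\ isRun (gT G) R /\ restr R (size t) = t.

Definition ftf (t : seq (gM G)) : seq (gM (cobj S P)) :=
  match excluded_middle_informative (fthere t) with
  | left h => ln (proj1_sig (cid h)) P (size t) | right _ => [::] end.

Lemma ftf_spec R t : List.In R s -> isRun (gT G) R -> restr R (size t) = t -> ftf t = ln R P (size t).
Proof.
move=> hi hr e; rewrite /ftf; case: excluded_middle_informative => [h|hn]; last first.
  by exfalso; apply: hn; exists R.
case: (cid h) => R0 [hi0 [hr0 e0]] /=.
have [_ hc] := P_spec hi0 hr0.
apply: (hc R hi hr P (leqnn P)); by rewrite e0 e.
Qed.

Lemma node_R t : gT G t -> exists R, List.In R s /\ isRun (gT G) R /\ restr R (size t) = t.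
Proof. move=> ht; have [R [hr e]] := node_on_run ht; exists R; split => //; exact: Hs. Qed.

Lemma ln_spec R : List.In R s -> isRun (gT G) R ->
  exists n (R' : nat -> gM (cobj S n)) (h : n <= P), gA (cobj S n) R' /\
    (forall k, hfun (q n) (restr R' k) = hfun f (restr R k)) /\
    forall d, ln R P d = hfun (cmap S h) (restr R' d).
Proof.
move=> hi hr; have [n [R' [l [hA e]]]] := lift_spec hr.
have [hn _] := P_spec hi hr.
have h : n <= P by move: hn; rewrite /nR l.
exists n, R', h; split => //; split => // d; by rewrite /ln l (tr_eq h).
Qed.

Definition ft : hom G (cobj S P).
refine (@Hom G (cobj S P) ftf _ _ _ _).
- move=> t ht; have [R [hi [hr e]]] := node_R ht.
  have [n [R' [h [hA [_ el]]]]] := ln_spec hi hr.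
  rewrite (ftf_spec hi hr e) el; exact: (hom_T (cmap S h) (gA_run hA _)).
- move=> t ht; have [R [hi [hr e]]] := node_R ht.
  have [n [R' [h [hA [_ el]]]]] := ln_spec hi hr.
  by rewrite (ftf_spec hi hr e) el (hom_size (cmap S h) (gA_run hA _)) size_restr.
- move=> t k ht; have [R [hi [hr e]]] := node_R ht.
  have [n [R' [h [hA [_ el]]]]] := ln_spec hi hr.
  have e' : restr R (size (take k t)) = take k t by rewrite size_take_min -take_restr e.
  rewrite (ftf_spec hi hr e) (ftf_spec hi hr e') !el size_take_min -take_restr.
  exact: (hom_pref (cmap S h) k (gA_run hA _)).
- move=> R hR; have hr := gA_run hR; have hi := Hs hr.
  have [n [R' [h [hA [_ el]]]]] := ln_spec hi hr.
  have [R'' [hA'' e'']] := hom_A (cmap S h) hA.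
  exists R''; split => // k.
  by rewrite (ftf_spec hi hr (congr1 (restr R) (size_restr R k))) size_restr el e''.
Defined.

Lemma ft_comp : comp_eq ft (q P) f.
Proof.
move=> t ht; have [R [hi [hr e]]] := node_R ht.
have [n [R' [h [hA [eq el]]]]] := ln_spec hi hr.
rewrite /= (ftf_spec hi hr e) el ((proj1 Hq) n P h _ (gA_run hA _)) eq e //.
Qed.
End Lift.

Lemma fin_wfs (G : game) : finite_runs G -> trivial_for_Alice G -> weakly_finitely_small G.
Proof.
move=> [s Hs] Ht S L q Hq f.
eexists; eexists; exact: (@ft_comp S L q Hq G f s Hs Ht).
Qed.

Theorem mainTheorem8 (G : game) :
  weakly_finitely_small G <-> (finite_runs G /\ trivial_for_Alice G).
Proof.
split.
- move=> W; have T := wfs_triv W; split => //; exact: wfs_fin W T.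
- move=> [hf ht]; exact: fin_wfs hf ht.
Qed.
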